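(* Let $\alpha,\beta$ be real constants and $F$ a smooth real function of one variable. Consider the cylindrical Westervelt-type equation $$p_{rr}+\frac{1}{r}p_r+F(p)_{tt}+\alpha p_{ttt}+\beta\Big(p_{rr}+\frac{1}{r}p_r\Big)_t=0$$ for $p(r,t)$, $r>0$. Then every smooth solution satisfies the conservation laws $\partial_rT^r+\partial_tT^t=0$ with $(T^r,T^t)$ given by $$\Big(p-rp_r\ln r+\beta\big(p_t-r\ln(r)\,p_{tr}\big),\ -r\ln(r)\,\big(F'(p)p_t+\alpha p_{tt}\big)\Big),$$ $$\Big(t\big(p-rp_r\ln r+\beta(p_t-r\ln(r)\,p_{tr})\big),\ -r\ln(r)\,\big(t(F'(p)p_t+\alpha p_{tt})-F(p)-\alpha p_t\big)\Big),$$ corresponding to the multipliers $r\ln r$ and $rt\ln r$, respectively.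
   Context: Subscripts denote partial derivatives. *)

(* Defs.v *)
From Stdlib Require Import Reals List.
From Coquelicot Require Import Coquelicot.
Open Scope R_scope.

Definition dr (f : R -> R -> R) : R -> R -> R :=
  fun r t => Derive (fun x => f x t) r.
Definition dt (f : R -> R -> R) : R -> R -> R :=
  fun r t => Derive (fun y => f r y) t.

(* Iterated partial derivative: true = d/dr, false = d/dt, applied right-to-left. *)
Fixpoint iter_d (l : list bool) (f : R -> R -> R) : R -> R -> R :=
  match l with
  | nil => f
  | b :: l' => (if b then dr else dt) (iter_d l' f)
  end.

Definition smooth_halfplane (f : R -> R -> R) : Prop :=
  forall (l : list bool) (r t : R), 0 < r ->
    ex_derive (fun x => iter_d l f x t) r /\
    ex_derive (fun y => iter_d l f r y) t /\
    continuous (fun z : R * R => iter_d l f (fst z) (snd z)) (r, t).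

Definition smooth1 (F : R -> R) : Prop :=
  forall (n : nat) (x : R), ex_derive (Derive_n F n) x.

Definition westervelt_lhs (alpha beta : R) (F : R -> R) (p : R -> R -> R)
    (r t : R) : R :=
  dr (dr p) r t + dr p r t / r
  + dt (dt (fun r' t' => F (p r' t'))) r t
  + alpha * dt (dt (dt p)) r t
  + beta * dt (fun r' t' => dr (dr p) r' t' + dr p r' t' / r') r t.

Definition T1r (beta : R) (p : R -> R -> R) : R -> R -> R :=
  fun r t => p r t - r * dr p r t * ln r
             + beta * (dt p r t - r * ln r * dr (dt p) r t).
Definition T1t (alpha : R) (F : R -> R) (p : R -> R -> R) : R -> R -> R :=
  fun r t => - r * ln r * (Derive F (p r t) * dt p r t + alpha * dt (dt p) r t).

Definition T2r (beta : R) (p : R -> R -> R) : R -> R -> R :=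
  fun r t => t * (p r t - r * dr p r t * ln r
                  + beta * (dt p r t - r * ln r * dr (dt p) r t)).
Definition T2t (alpha : R) (F : R -> R) (p : R -> R -> R) : R -> R -> R :=
  fun r t => - r * ln r * (t * (Derive F (p r t) * dt p r t + alpha * dt (dt p) r t)
                           - F (p r t) - alpha * dt p r t).

(* Main.v *)
Require Import Defs.
From Stdlib Require Import Reals Lra List.
From Coquelicot Require Import Coquelicot.
Open Scope R_scope.

Lemma comm_gen (p : R -> R -> R) (l : list bool) (r t : R) :
  smooth_halfplane p -> 0 < r ->
  dr (dt (iter_d l p)) r t = dt (dr (iter_d l p)) r t.
Proof.
  intros Hp Hr.
  unfold dr, dt.
  apply (Schwarz (iter_d l p)).
  - assert (Hd : 0 < r) by exact Hr.
    exists (mkposreal r Hd). intros u v Hu _. simpl in Hu.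
    assert (Hu0 : 0 < u).
    { apply Rabs_def2 in Hu. lra. }
    destruct (Hp l u v Hu0) as [H1 [H2 _]].
    destruct (Hp (false :: l) u v Hu0) as [H3 _].
    destruct (Hp (true :: l) u v Hu0) as [_ [H4 _]].
    repeat split; assumption.
  - apply continuity_2d_pt_filterlim.
    exact (proj2 (proj2 (Hp (true :: false :: l) r t Hr))).
  - apply continuity_2d_pt_filterlim.
    exact (proj2 (proj2 (Hp (false :: true :: l) r t Hr))).
Qed.

Theorem mainTheorem8 (alpha beta : R) (F : R -> R) (p : R -> R -> R) :
  smooth1 F ->
  smooth_halfplane p ->
  (forall r t, 0 < r -> westervelt_lhs alpha beta F p r t = 0) ->
  forall r t, 0 < r ->
    dr (T1r beta p) r t + dt (T1t alpha F p) r t = 0 /\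
    dr (T2r beta p) r t + dt (T2t alpha F p) r t = 0.
Proof.
  intros HF Hp HW r t Hr.
  assert (HF0 : forall x, ex_derive F x) by exact (HF 0%nat).
  assert (HF1 : forall x, ex_derive (fun y => Derive F y) x) by exact (HF 1%nat).
  pose proof (Hp nil r t Hr) as [S0r [S0t _]].
  pose proof (Hp (true :: nil) r t Hr) as [S1r [S1t _]].
  pose proof (Hp (false :: nil) r t Hr) as [S2r [S2t _]].
  pose proof (Hp (true :: false :: nil) r t Hr) as [S3r [S3t _]].
  pose proof (Hp (true :: true :: nil) r t Hr) as [S4r [S4t _]].
  pose proof (Hp (false :: false :: nil) r t Hr) as [S5r [S5t _]].
  simpl in *.
  assert (C1 : dt (dr p) r t = dr (dt p) r t) by (symmetry; exact (comm_gen p nil r t Hp Hr)).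
  assert (C2 : dt (dr (dr p)) r t = dr (dr (dt p)) r t).
  { pose proof (comm_gen p (true :: nil) r t Hp Hr) as HC. simpl in HC. rewrite <- HC.
    unfold dr at 1 3. apply Derive_ext_loc.
    assert (Hd : 0 < r) by exact Hr.
    exists (mkposreal r Hd). intros u Hu. simpl in Hu.
    unfold ball in Hu; simpl in Hu; unfold AbsRing_ball in Hu; simpl in Hu.
    assert (Hu0 : 0 < u).
    { unfold abs, minus, plus, opp in Hu; simpl in Hu. apply Rabs_def2 in Hu. lra. }
    symmetry. exact (comm_gen p nil u t Hp Hu0). }
  assert (E2 : dt (dt (fun r' t' => F (p r' t'))) r t =
     Derive (fun y => Derive F y) (p r t) * dt p r t * dt p r t + Derive F (p r t) * dt (dt p) r t).
  { unfold dt at 1.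
    rewrite (Derive_ext (fun y => dt (fun r' t' => F (p r' t')) r y)
                       (fun y => Derive F (p r y) * dt p r y)).
    - apply is_derive_unique. auto_derive.
      + repeat split; auto.
      + unfold dt. ring.
    - intros y. unfold dt. apply is_derive_unique. auto_derive.
      + split; [ | split; [ | exact I]]. apply HF0.
        exact (proj1 (proj2 (Hp nil r y Hr))).
      + rewrite Rmult_1_l, Rmult_comm. reflexivity. }
  assert (E1 : dt (fun r' t' => dr (dr p) r' t' + dr p r' t' / r') r t =
     dt (dr (dr p)) r t + dt (dr p) r t / r).
  { unfold dt at 1. apply is_derive_unique. auto_derive.
    + repeat split; auto.
    + unfold dt. field. lra. }
  assert (D1 : dr (T1r beta p) r t =
     - ln r * (dr p r t + r * dr (dr p) r t) - beta * ln r * (dr (dt p) r t + r * dr (dr (dt p)) r t)).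
  { unfold dr at 1, T1r. apply is_derive_unique. auto_derive.
    + repeat split; auto.
    + unfold dr. field. lra. }
  assert (D2 : dt (T1t alpha F p) r t =
     - r * ln r * (Derive (fun y => Derive F y) (p r t) * dt p r t * dt p r t
        + Derive F (p r t) * dt (dt p) r t + alpha * dt (dt (dt p)) r t)).
  { unfold dt at 1, T1t. apply is_derive_unique. auto_derive.
    + repeat split; auto.
    + unfold dt. ring. }
  assert (D3 : dr (T2r beta p) r t = t * dr (T1r beta p) r t).
  { rewrite D1. unfold dr at 1, T2r. apply is_derive_unique. auto_derive.
    + repeat split; auto.
    + unfold dr. field. lra. }
  assert (D4 : dt (T2t alpha F p) r t = t * dt (T1t alpha F p) r t).
  { rewrite D2. unfold dt at 1, T2t. apply is_derive_unique. auto_derive.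
    + repeat split; auto.
    + unfold dt. replace (Derive (fun x : R => F x) (p r t)) with (Derive F (p r t)) by reflexivity. ring. }
  assert (K : dr (T1r beta p) r t + dt (T1t alpha F p) r t = 0).
  { transitivity (- r * ln r * westervelt_lhs alpha beta F p r t).
    - rewrite D1, D2. unfold westervelt_lhs. rewrite E2, E1, C1, C2. field. lra.
    - rewrite HW by exact Hr. ring. }
  split; [exact K|].
  rewrite D3, D4. rewrite <- Rmult_plus_distr_l, K. ring.
Qed.
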